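(* Let $C$ be a smooth convex plane curve with no two parallel tangent lines, with its associated domain $D$ and area distance $f:D\to\mathbb{R}$ (defined in the context), and let $C(r)$ be a regular parameterization of $C$. For $p\in D$ denote by $C(u(p))$ and $C(v(p))$ the two extremities of the minimal chord $l(p)$, and regard $u$ and $v$ as (differentiable) functions of $p$. Then $$\nabla u=-\frac{2\,R\,C'(v)}{[C'(u),C'(v)]},\qquad \nabla v=\frac{2\,R\,C'(u)}{[C'(u),C'(v)]}.$$
   Context: $C$ may have $2$, $1$ or $0$ endpoints. $D$ is the plane region bounded by $C$ and by the image(s) of $C$ under the homothety of ratio $1/2$ centred at each endpoint of $C$. A chord is a line segment joining two points of $C$. For $p\in D$, each chord $l$ through $p$ bounds, together with $C$, a region $D_l$; $l(p)$ denotes the chord through $p$ for which the area of $D_{l}$ is minimal, and the area distance is $f(p)=\tfrac12\,\mathrm{area}(D_{l(p)})$. It is known that every $p\in D$ is the midpoint of $l(p)$, i.e. $2p=C(u(p))+C(v(p))$. Notation: for plane vectors $X,Y$, $[X,Y]$ is the determinant of the $2\times2$ matrix with columns $X,Y$; $R$ is the counterclockwise rotation by ninety degrees, so $[X,Y]=-X^tRY$. *)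

(* Defs.v *)
From Stdlib Require Import Reals.
From Coquelicot Require Import Coquelicot.
Open Scope R_scope.

Definition pt := (R * R)%type.

(* [X,Y] = det of the 2x2 matrix with columns X, Y. *)
Definition cross (X Y : pt) : R := fst X * snd Y - snd X * fst Y.

(* R = counterclockwise rotation by ninety degrees. *)
Definition rot (X : pt) : pt := (- snd X, fst X).

Definition scal2 (a : R) (X : pt) : pt := (a * fst X, a * snd X).
Definition add2 (X Y : pt) : pt := (fst X + fst Y, snd X + snd Y).
Definition sub2 (X Y : pt) : pt := (fst X - fst Y, snd X - snd Y).

Definition is_interval (I : R -> Prop) : Prop :=
  forall a b c, I a -> I b -> a <= c <= b -> I c.

Definition open2 (D : R -> R -> Prop) : Prop :=
  forall x y, D x y -> exists eps : R, 0 < eps /\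
    forall x' y', Rabs (x' - x) < eps -> Rabs (y' - y) < eps -> D x' y'.

Definition C1_curve (C C' : R -> pt) : Prop :=
  (forall r, derivable_pt_lim (fun t => fst (C t)) r (fst (C' r)) /\
             derivable_pt_lim (fun t => snd (C t)) r (snd (C' r))) /\
  (forall r, continuity_pt (fun t => fst (C' t)) r /\
             continuity_pt (fun t => snd (C' t)) r).

Definition regular_on (I : R -> Prop) (C' : R -> pt) : Prop :=
  forall r, I r -> C' r <> (0, 0).

Definition injective_on (I : R -> Prop) (C : R -> pt) : Prop :=
  forall r s, I r -> I s -> C r = C s -> r = s.

Definition convex_curve (I : R -> Prop) (C C' : R -> pt) : Prop :=
  forall r, I r ->
    (forall s, I s -> 0 <= cross (C' r) (sub2 (C s) (C r))) \/
    (forall s, I s -> cross (C' r) (sub2 (C s) (C r)) <= 0).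

Definition no_parallel_tangents (I : R -> Prop) (C' : R -> pt) : Prop :=
  forall r s, I r -> I s -> r <> s -> cross (C' r) (C' s) <> 0.

Definition has_gradient (f : R -> R -> R) (x y : R) (g : pt) : Prop :=
  differentiable_pt_lim f x y (fst g) (snd g).

(* Main.v *)
Require Import Defs.
From Stdlib Require Import Reals Lra Psatz.
From Coquelicot Require Import Coquelicot.
Open Scope R_scope.

Lemma part_x f x y lx ly : differentiable_pt_lim f x y lx ly ->
  derivable_pt_lim (fun t => f t y) x lx.
Proof.
  intros H eps Heps.
  destruct (H (mkposreal (eps/2) ltac:(lra))) as [d Hd].
  exists d. intros h Hh Hhd.
  specialize (Hd (x+h) y). replace (x+h-x) with h in Hd by ring.
  replace (y-y) with 0 in Hd by ring. rewrite Rabs_R0 in Hd.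
  specialize (Hd Hhd ltac:(destruct d; simpl; lra)).
  rewrite Rmax_left in Hd by apply Rabs_pos. simpl in Hd.
  replace ((f (x + h) y - f x y) / h - lx) with ((f (x + h) y - f x y - (lx * h + ly * 0))/h) by (field; auto).
  unfold Rdiv. rewrite Rabs_mult, Rabs_inv.
  apply Rabs_pos_lt in Hh.
  apply (Rmult_lt_reg_r (Rabs h)); auto.
  rewrite Rmult_assoc, Rinv_l by lra. nra.
Qed.

Lemma part_y f x y lx ly : differentiable_pt_lim f x y lx ly ->
  derivable_pt_lim (fun t => f x t) y ly.
Proof.
  intros H eps Heps.
  destruct (H (mkposreal (eps/2) ltac:(lra))) as [d Hd].
  exists d. intros h Hh Hhd.
  specialize (Hd x (y+h)). replace (y+h-y) with h in Hd by ring.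
  replace (x-x) with 0 in Hd by ring. rewrite Rabs_R0 in Hd.
  specialize (Hd ltac:(destruct d; simpl; lra) Hhd).
  rewrite Rmax_right in Hd by apply Rabs_pos. simpl in Hd.
  replace ((f x (y+h) - f x y) / h - ly) with ((f x (y + h) - f x y - (lx * 0 + ly * h))/h) by (field; auto).
  unfold Rdiv. rewrite Rabs_mult, Rabs_inv.
  apply Rabs_pos_lt in Hh.
  apply (Rmult_lt_reg_r (Rabs h)); auto.
  rewrite Rmult_assoc, Rinv_l by lra. nra.
Qed.

Lemma loc_deriv (F : R -> R) (x0 a b d : R) (eps : R) :
  0 < eps -> (forall t, Rabs (t - x0) < eps -> F t = a * t + b) ->
  derivable_pt_lim F x0 d -> d = a.
Proof.
  intros He Heq Hd.
  apply is_derive_Reals in Hd.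
  assert (H2 : is_derive (fun t => a * t + b) x0 d).
  { apply (is_derive_ext_loc F). exists (mkposreal eps He). intros t Ht.
    apply Heq. exact Ht. exact Hd. }
  apply is_derive_Reals in H2.
  apply (uniqueness_limite (fun t => a * t + b) x0); auto.
  apply is_derive_Reals. auto_derive; auto. ring.
Qed.
Lemma comp_sum (P : pt -> R) (C C' : R -> pt) (g h : R -> R) x0 dg dh :
  (forall r, derivable_pt_lim (fun t => P (C t)) r (P (C' r))) ->
  derivable_pt_lim g x0 dg -> derivable_pt_lim h x0 dh ->
  derivable_pt_lim (fun t => P (C (g t)) + P (C (h t))) x0
    (P (C' (g x0)) * dg + P (C' (h x0)) * dh).
Proof.
  intros HP Hg Hh.
  apply (derivable_pt_lim_plus (fun t => P (C (g t))) (fun t => P (C (h t)))).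
  - apply (derivable_pt_lim_comp g (fun t => P (C t))); auto.
  - apply (derivable_pt_lim_comp h (fun t => P (C t))); auto.
Qed.

Theorem mainTheorem1
  (I : R -> Prop) (C C' : R -> pt)
  (D : R -> R -> Prop) (u v : R -> R -> R)
  (HI : is_interval I)
  (HC : C1_curve C C')
  (Hreg : regular_on I C')
  (Hinj : injective_on I C)
  (Hconv : convex_curve I C C')
  (Hpar : no_parallel_tangents I C')
  (HD : open2 D)
  (Huv_in : forall x y, D x y -> I (u x y) /\ I (v x y))
  (Huv_ne : forall x y, D x y -> u x y <> v x y)
  (Hmid : forall x y, D x y ->
            scal2 2 (x, y) = add2 (C (u x y)) (C (v x y)))
  (Hdiff : forall x y, D x y ->
            (exists g, has_gradient u x y g) /\ (exists g, has_gradient v x y g)) :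
  forall x y, D x y ->
    has_gradient u x y
      (scal2 (- 2 / cross (C' (u x y)) (C' (v x y))) (rot (C' (v x y)))) /\
    has_gradient v x y
      (scal2 (2 / cross (C' (u x y)) (C' (v x y))) (rot (C' (u x y)))).
Proof.
  intros x y Hxy.
  destruct (Hdiff x y Hxy) as [[[a1 a2] Ha] [[b1 b2] Hb]].
  unfold has_gradient in Ha, Hb; simpl in Ha, Hb.
  destruct HC as [HC _].
  assert (H1 : forall r, derivable_pt_lim (fun t => fst (C t)) r (fst (C' r))) by (intro r; apply HC).
  assert (H2 : forall r, derivable_pt_lim (fun t => snd (C t)) r (snd (C' r))) by (intro r; apply HC).
  destruct (HD x y Hxy) as [eps [Heps HDe]].
  assert (Hc : cross (C' (u x y)) (C' (v x y)) <> 0).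
  { destruct (Huv_in x y Hxy). apply Hpar; auto. }
  assert (Mx : forall t s, D t s -> fst (C (u t s)) + fst (C (v t s)) = 2 * t).
  { intros t s Hts. pose proof (f_equal fst (Hmid t s Hts)). simpl in H. lra. }
  assert (My : forall t s, D t s -> snd (C (u t s)) + snd (C (v t s)) = 2 * s).
  { intros t s Hts. pose proof (f_equal snd (Hmid t s Hts)). simpl in H. lra. }
  assert (Ry0 : Rabs (y - y) < eps) by (replace (y-y) with 0 by ring; rewrite Rabs_R0; lra).
  assert (Rx0 : Rabs (x - x) < eps) by (replace (x-x) with 0 by ring; rewrite Rabs_R0; lra).
  pose proof (part_x _ _ _ _ _ Ha) as Hax.
  pose proof (part_y _ _ _ _ _ Ha) as Hay.
  pose proof (part_x _ _ _ _ _ Hb) as Hbx.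
  pose proof (part_y _ _ _ _ _ Hb) as Hby.
  assert (E1 : fst (C' (u x y)) * a1 + fst (C' (v x y)) * b1 = 2).
  { apply (loc_deriv (fun t => fst (C (u t y)) + fst (C (v t y))) x 2 0 _ eps Heps).
    - intros t Ht. rewrite Mx by (apply HDe; auto). ring.
    - exact (comp_sum fst C C' (fun t => u t y) (fun t => v t y) x a1 b1 H1 Hax Hbx). }
  assert (E2 : snd (C' (u x y)) * a1 + snd (C' (v x y)) * b1 = 0).
  { apply (loc_deriv (fun t => snd (C (u t y)) + snd (C (v t y))) x 0 (2*y) _ eps Heps).
    - intros t Ht. rewrite My by (apply HDe; auto). ring.
    - exact (comp_sum snd C C' (fun t => u t y) (fun t => v t y) x a1 b1 H2 Hax Hbx). }
  assert (E3 : fst (C' (u x y)) * a2 + fst (C' (v x y)) * b2 = 0).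
  { apply (loc_deriv (fun t => fst (C (u x t)) + fst (C (v x t))) y 0 (2*x) _ eps Heps).
    - intros t Ht. rewrite Mx by (apply HDe; auto). ring.
    - exact (comp_sum fst C C' (fun t => u x t) (fun t => v x t) y a2 b2 H1 Hay Hby). }
  assert (E4 : snd (C' (u x y)) * a2 + snd (C' (v x y)) * b2 = 2).
  { apply (loc_deriv (fun t => snd (C (u x t)) + snd (C (v x t))) y 2 0 _ eps Heps).
    - intros t Ht. rewrite My by (apply HDe; auto). ring.
    - exact (comp_sum snd C C' (fun t => u x t) (fun t => v x t) y a2 b2 H2 Hay Hby). }
  unfold has_gradient, scal2, rot, cross in *; simpl.
  destruct (C' (u x y)) as [p1 p2]; destruct (C' (v x y)) as [q1 q2]; simpl in *.
  set (c := p1 * q2 - p2 * q1) in *.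
  assert (A1 : a1 = - 2 / c * - q2).
  { assert (a1 * c = 2 * q2).
    { replace (a1 * c) with (q2 * (p1 * a1 + q1 * b1) - q1 * (p2 * a1 + q2 * b1)) by (unfold c; ring).
      rewrite E1, E2; ring. }
    field_simplify; auto. rewrite <- H. field; auto. }
  assert (A2 : a2 = - 2 / c * q1).
  { assert (a2 * c = - 2 * q1).
    { replace (a2 * c) with (q2 * (p1 * a2 + q1 * b2) - q1 * (p2 * a2 + q2 * b2)) by (unfold c; ring).
      rewrite E3, E4; ring. }
    field_simplify; auto. rewrite <- H. field; auto. }
  assert (B1 : b1 = 2 / c * - p2).
  { assert (b1 * c = - 2 * p2).
    { replace (b1 * c) with (p1 * (p2 * a1 + q2 * b1) - p2 * (p1 * a1 + q1 * b1)) by (unfold c; ring).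
      rewrite E1, E2; ring. }
    field_simplify; auto. rewrite <- H. field; auto. }
  assert (B2 : b2 = 2 / c * p1).
  { assert (b2 * c = 2 * p1).
    { replace (b2 * c) with (p1 * (p2 * a2 + q2 * b2) - p2 * (p1 * a2 + q1 * b2)) by (unfold c; ring).
      rewrite E3, E4; ring. }
    field_simplify; auto. rewrite <- H. field; auto. }
  rewrite <- A1, <- A2, <- B1, <- B2. auto.
Qed.
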